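(* Consider the numerator parameters $\frac{v^{(i)}_r+\sigma}{\ell_r}$ ($r=1,\dots,m$, $\sigma=0,\dots,\ell_r-1$) and denominator parameters $\frac{t}{\ell_0}$ ($t=1,\dots,\ell_0$) of the series $F^{(\mathbf b_i)}_{\mathbf b_i}(\lambda)=\sum_{s\ge0}\frac{\prod_r\prod_\sigma((v^{(i)}_r+\sigma)/\ell_r)_s}{\prod_{t=1}^{\ell_0}(t/\ell_0)_s}\lambda^{s\ell_0}$. (a) If $\mathbf b_i$ is an interior point of $P(A)$, then exactly $\ell_0-R_k$ factors appear in both numerator and denominator, namely $\{(1-s_0^{(j)}/\ell_0)_s:\mathbf b_j\in\mathcal B_k\text{ a boundary point of }P(A)\}$. (b) If $\mathbf b_i$ is a boundary point of $P(A)$, then exactly $\ell_0-R_k-1$ factors appear in both numerator and denominator, namely $\{(1-s_0^{(j)}/\ell_0)_s:\mathbf b_j\in\mathcal B_k\text{ a boundary point of }P(A),\ \mathbf b_j\neq\mathbf b_i\}$.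
   Context: Let $A=\{\mathbf a_1,\dots,\mathbf a_m\}\subseteq\mathbb Z^n$ be linearly independent over $\mathbb R$, $\mathbf a_0\in\mathbb Z^n$, and $\ell_0,\dots,\ell_m$ positive integers with gcd $1$, $\ell_0\mathbf a_0=\sum_{j=1}^m\ell_j\mathbf a_j$, $\ell_0=\sum_{j=1}^m\ell_j$. Let $\mathbb ZA$, $\mathbb ZA_+$ be the groups generated by $A$ and $A\cup\{\mathbf a_0\}$. Let $V$ be the real span of $A$, $V_{\mathbb Z}=V\cap\mathbb Z^n$, $P(A)=\{\sum_jc_j\mathbf a_j:0\le c_j<1\}$, $\mathcal B=V_{\mathbb Z}\cap P(A)$. Each $\mathbf b\in\mathcal B$ is written uniquely $\sum_rv_r\mathbf a_r$ with $v_r\in[0,1)$; $\mathbf b$ is an interior point of $P(A)$ if all $v_r>0$ and a boundary point otherwise. Fix a coset $\mathcal C_k$ of $\mathbb ZA_+$ in $V_{\mathbb Z}$, $\mathcal B_k=\mathcal B\cap\mathcal C_k$ (which has $\ell_0$ elements), and let $R_k$ be the number of interior points of $P(A)$ in $\mathcal B_k$. Fix $\mathbf b_i=\sum_rv^{(i)}_r\mathbf a_r\in\mathcal B_k$. For $\mathbf b_j\in\mathcal B_k$ let $s_0^{(j)}\in\{0,\dots,\ell_0-1\}$ be the unique element with $\mathbf b_i+s_0^{(j)}\mathbf a_0\equiv\mathbf b_j\pmod{\mathbb ZA}$. Pochhammer: $(a)_s=a(a+1)\cdots(a+s-1)$. *)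

(* Defs.v *)
From HB Require Import structures.
From mathcomp Require Import all_boot all_order all_algebra.
From mathcomp Require Import boolp reals.
Set Implicit Arguments. Unset Strict Implicit. Unset Printing Implicit Defensive.
Import Order.TTheory GRing.Theory Num.Theory.
Local Open Scope ring_scope.

(* Vectors of Z^n are row vectors 'rV[int]_n; A = {a_1..a_m} is given as the
   rows of an m x n integer matrix. *)

Definition intmx (R : realType) (m n : nat) (M : 'M[int]_(m, n)) : 'M[R]_(m, n) :=
  map_mx (fun z : int => z%:~R) M.

Definition inZA (m n : nat) (A : 'M[int]_(m, n)) (x : 'rV[int]_n) : Prop :=
  exists z : 'rV[int]_m, x = z *m A.

Definition inZAplus (m n : nat) (A : 'M[int]_(m, n)) (a0 : 'rV[int]_n)
    (x : 'rV[int]_n) : Prop :=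
  exists (z : 'rV[int]_m) (z0 : int), x = z *m A + z0 *: a0.

(* b is in B = V_Z ∩ P(A) (b integral, b = sum c_r a_r with 0 <= c_r < 1) *)
Definition in_PA (R : realType) (m n : nat) (A : 'M[int]_(m, n)) (b : 'rV[int]_n) : Prop :=
  exists c : 'rV[R]_m, (forall r, 0 <= c 0 r < 1) /\ c *m intmx R A = intmx R b.

Definition interior_PA (R : realType) (m n : nat) (A : 'M[int]_(m, n)) (b : 'rV[int]_n) : Prop :=
  exists c : 'rV[R]_m, (forall r, 0 < c 0 r < 1) /\ c *m intmx R A = intmx R b.

Definition boundary_PA (R : realType) (m n : nat) (A : 'M[int]_(m, n)) (b : 'rV[int]_n) : Prop :=
  in_PA R A b /\ ~ interior_PA R A b.

Definition s0 (m n : nat) (A : 'M[int]_(m, n)) (a0 : 'rV[int]_n) (l0 : nat)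
    (bi bj : 'rV[int]_n) : nat :=
  find (fun s : nat => `[< inZA A (bj - bi - (s%:Z) *: a0) >]) (iota 0 l0).

Definition num_params (R : realType) (m : nat) (l : 'I_m -> nat) (v : 'rV[R]_m) : seq R :=
  flatten [seq [seq (v 0 r + sg%:R) / (l r)%:R | sg <- iota 0 (l r)] | r <- enum 'I_m].

Definition den_params (R : realType) (l0 : nat) : seq R :=
  [seq t%:R / l0%:R | t <- iota 1 l0].

(* parameters appearing in both numerator and denominator (the denominator
   parameters are pairwise distinct, so this is the multiset intersection) *)
Definition common_params (R : realType) (num den : seq R) : seq R :=
  [seq x <- den | x \in num].

(* Main.v *)
Require Import Defs.
From HB Require Import structures.
From mathcomp Require Import all_boot all_order all_algebra.
From mathcomp Require Import boolp reals.
From mathcomp Require Import zify ring lra.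
Import Order.TTheory GRing.Theory Num.Theory.
Local Open Scope ring_scope.


Section Intmx.
Variable R : realType.

Lemma intmxD p q (x y : 'M[int]_(p, q)) : intmx R (x + y) = intmx R x + intmx R y.
Proof. by apply/matrixP => i j; rewrite !mxE intrD. Qed.
Lemma intmxN p q (x : 'M[int]_(p, q)) : intmx R (- x) = - intmx R x.
Proof. by apply/matrixP => i j; rewrite !mxE intrN. Qed.
Lemma intmxB p q (x y : 'M[int]_(p, q)) : intmx R (x - y) = intmx R x - intmx R y.
Proof. by rewrite intmxD intmxN. Qed.
Lemma intmx0 p q : intmx R (0 : 'M[int]_(p, q)) = 0.
Proof. by apply/matrixP => i j; rewrite !mxE. Qed.
Lemma intmxZ p q k (x : 'M[int]_(p, q)) : intmx R (k *: x) = k%:~R *: intmx R x.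
Proof. by apply/matrixP => i j; rewrite !mxE intrM. Qed.
Lemma intmxM p q r (x : 'M[int]_(p, q)) (y : 'M[int]_(q, r)) :
  intmx R (x *m y) = intmx R x *m intmx R y.
Proof.
apply/matrixP => i j; rewrite !mxE.
rewrite (big_morph (fun z : int => z%:~R : R) (@intrD R) (mulr0z 1)).
by apply: eq_bigr => k _; rewrite !mxE intrM.
Qed.
Lemma intmx_row p q j (x : 'M[int]_(p, q)) : intmx R (row j x) = row j (intmx R x).
Proof. by apply/matrixP => i k; rewrite !mxE. Qed.
Lemma intmx_inj p q : injective (@intmx R p q).
Proof.
move=> x y /matrixP E; apply/matrixP => i j; move: (E i j); rewrite !mxE.
exact: intr_inj.
Qed.
Lemma intmx_sum p q I (r : seq I) (P : pred I) (F : I -> 'M[int]_(p, q)) :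
  intmx R (\sum_(i <- r | P i) F i) = \sum_(i <- r | P i) intmx R (F i).
Proof. exact: (big_morph _ (@intmxD p q) (@intmx0 p q)). Qed.
End Intmx.

Section Main.
Variables (R : realType) (n m : nat) (A : 'M[int]_(m, n)) (a0 : 'rV[int]_n)
  (l : 'I_m -> nat) (l0 : nat).
Hypothesis hA : row_free (intmx R A).
Hypothesis hl : forall j, (0 < l j)%N.
Hypothesis hl0 : (0 < l0)%N.
Hypothesis hgcd : gcdn l0 (\big[gcdn/0%N]_(j < m) l j) = 1%N.
Hypothesis hrel : (l0%:Z) *: a0 = \sum_(j < m) ((l j)%:Z) *: row j A.
Variables (bi : 'rV[int]_n) (v : 'rV[R]_m).
Hypothesis hv : (forall r, 0 <= v 0 r < 1) /\ v *m intmx R A = intmx R bi.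

Local Notation AR := (intmx R A).
Definition lv : 'rV[R]_m := \row_j (l j)%:R.
Definition xs (s : nat) : 'rV[R]_m := v + (s%:R / l0%:R) *: lv.
Definition inZ (y : R) : Prop := exists k : int, y = k%:~R.
Definition Bd (s : nat) : bool := `[< exists r, inZ (xs s 0 r) >].
Definition Good (b : 'rV[int]_n) : Prop := in_PA R A b /\ inZAplus A a0 (b - bi).
Local Notation phi b := (s0 A a0 l0 bi b).

Lemma l0R : (l0%:R : R) != 0.
Proof. by rewrite pnatr_eq0 -lt0n. Qed.

Lemma a0R : intmx R a0 = l0%:R^-1 *: (lv *m AR).
Proof.
have h : lv *m AR = l0%:R *: intmx R a0.
  have := congr1 (@intmx R _ _) hrel.
  rewrite intmxZ intmx_sum => ->.
  rewrite mulmx_sum_row; apply: eq_bigr => j _.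
  by rewrite intmxZ intmx_row /lv mxE.
by rewrite h scalerA mulVf ?scale1r // l0R.
Qed.

Lemma lZ_rel : (l0%:Z) *: a0 = (\row_j (l j)%:Z) *m A.
Proof. by rewrite hrel mulmx_sum_row; apply: eq_bigr => j _; rewrite mxE. Qed.

Lemma coordsP b s c z : c *m AR = intmx R b ->
  b - bi - s%:Z *: a0 = z *m A -> c = xs s + intmx R z.
Proof.
move=> hc hz; apply: (row_free_inj hA) => /=; rewrite hc.
have -> : b = z *m A + bi + s%:Z *: a0 by apply/eqP; rewrite -subr_eq -subr_eq addrAC hz.
rewrite !intmxD intmxM intmxZ a0R -hv.2 /xs !mulmxDl -scalemxAl scalerA.
by rewrite [RHS]addrC [RHS]addrA.
Qed.

Lemma int01 (k : int) : (0 : R) <= k%:~R -> k%:~R < (1 : R) -> k = 0.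
Proof. rewrite ler0z ltrz1; lia. Qed.

Lemma s0_spec b s : (s < l0)%N -> inZA A (b - bi - s%:Z *: a0) ->
  (phi b <= s)%N /\ inZA A (b - bi - (phi b)%:Z *: a0).
Proof.
move=> hs hP; rewrite /s0.
set p := (fun s : nat => _).
have hh : has p (iota 0 l0) by apply/hasP; exists s; [rewrite mem_iota; lia | exact/asboolP].
split.
  case: (ltnP s (find p (iota 0 l0))) => // H.
  have := before_find 0 H; rewrite nth_iota; last first.
    by have := find_size p (iota 0 l0); rewrite size_iota; lia.
  by rewrite add0n /p; move/asboolP.
have := nth_find 0 hh; rewrite nth_iota ?add0n; first by move/asboolP.
by have := hh; rewrite has_find size_iota.
Qed.

Lemma good_phi b : Good b -> (phi b < l0)%N /\ inZA A (b - bi - (phi b)%:Z *: a0).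
Proof.
case=> _ [z [z0 hz]].
set s := `|(z0 %% l0%:Z)%Z|%N.
set q := (z0 %/ l0%:Z)%Z.
have l0z : (l0%:Z) != 0 by rewrite eqz_nat -lt0n.
have hs0 : (s%:Z) = (z0 %% l0%:Z)%Z by rewrite gez0_abs // modz_ge0.
have hs : (s < l0)%N.
  have := ltz_pmod z0 (_ : 0 < l0%:Z); rewrite -hs0 ltz_nat; apply; by rewrite ltz_nat.
suff hP : inZA A (b - bi - s%:Z *: a0).
  have [h1 h2] := s0_spec _ _ hs hP; split => //; lia.
exists (z + q *: \row_j (l j)%:Z).
rewrite hz mulmxDl -scalemxAl -lZ_rel scalerA hs0.
rewrite {1}(divz_eq z0 l0%:Z) scalerDl -/q. by rewrite addrA addrK.
Qed.

Lemma good_coords b : Good b -> exists (c : 'rV[R]_m) (z : 'rV[int]_m), [/\ forall r, 0 <= c 0 r < 1,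
  c *m AR = intmx R b & c = xs (phi b) + intmx R z].
Proof.
move=> hb; have [_ [z hz]] := good_phi _ hb.
case: hb => [[c [hc1 hc2]] _].
exists c, z; split => //; exact: coordsP _ _ _ _ hc2 hz.
Qed.

Lemma intr_small (k : int) : (k%:~R : R) < 1 -> (- k)%:~R < (1 : R) -> k = 0.
Proof. rewrite !ltrz1; lia. Qed.

Lemma s0_inj b1 b2 : Good b1 -> Good b2 -> phi b1 = phi b2 -> b1 = b2.
Proof.
move=> h1 h2 e.
have [c1 [z1 [hc1 hb1 hx1]]] := good_coords _ h1.
have [c2 [z2 [hc2 hb2 hx2]]] := good_coords _ h2.
suff ec : c1 = c2 by apply: (@intmx_inj R); rewrite -hb1 -hb2 ec.
apply/matrixP => i j; rewrite [i]ord1.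
have hd : c1 0 j - c2 0 j = (z1 0 j - z2 0 j)%:~R.
  by rewrite hx1 hx2 e !mxE intrB; lra.
have := hc1 j; have := hc2 j => /andP [a1 a2] /andP [b1' b2'].
suff : z1 0 j - z2 0 j = 0 by move=> h; apply/eqP; rewrite -subr_eq0 hd h.
apply: intr_small; rewrite -?hd ?intrN -?hd; lra.
Qed.

Lemma s0_unique b s s' : (s < l0)%N -> (s' < l0)%N ->
  inZA A (b - bi - s%:Z *: a0) -> inZA A (b - bi - s'%:Z *: a0) -> s = s'.
Proof.
wlog le : s s' / (s' <= s)%N.
  move=> H hs hs' h1 h2; case: (leqP s' s) => hle; first exact: H.
  by symmetry; apply: H => //; apply: ltnW.
move=> hs hs' [z hz] [z' hz'].
set d := (s - s')%N.
have hd : d%:Z *: a0 = (z' - z) *m A.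
  rewrite mulmxBl -hz -hz' -subzn // scalerBl.
  by rewrite [RHS]addrC opprB addrA subrK.
have hr : (d%:R / l0%:R) *: lv = intmx R (z' - z).
  apply: (row_free_inj hA) => /=.
  rewrite -intmxM -hd intmxZ a0R scalerA -scalemxAl //.
have hdiv : forall j, (l0 %| d * l j)%N.
  move=> j; have := congr1 (fun M : 'rV[R]_m => M 0 j) hr; rewrite !mxE => e.
  have e2 : ((d * l j)%:Z)%:~R = ((z' 0 j - z 0 j) * l0%:Z)%:~R :> R.
    rewrite intrM -e.
    change (((d * l j)%:R : R) = d%:R / l0%:R * (l j)%:R * l0%:R).
    by rewrite natrM; field; rewrite l0R.
  have /(congr1 absz) := intr_inj e2; rewrite abszM /= => ->.
  exact: dvdn_mull.
have hg : (l0 %| d * \big[gcdn/0%N]_(j < m) l j)%N.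
  rewrite (big_morph (muln d) (muln_gcdr d) (muln0 d)).
  by apply/dvdn_biggcdP => j _; apply: hdiv.
have cop : coprime l0 (\big[gcdn/0%N]_(j < m) l j) by rewrite /coprime hgcd.
move: hg; rewrite mulnC (Gauss_dvdr _ cop) => hg.
have : d = 0%N.
  case: (posnP d) => // dpos; have := dvdn_leq dpos hg; rewrite /d; lia.
rewrite /d; lia.
Qed.

Lemma s0_surj s : (s < l0)%N -> exists b, Good b /\ phi b = s.
Proof.
move=> hs.
pose z : 'rV[int]_m := \row_r (- Num.floor (xs s 0 r)).
pose b := z *m A + s%:Z *: a0 + bi.
have hP : inZA A (b - bi - s%:Z *: a0) by exists z; rewrite /b !addrK.
have hc : (xs s + intmx R z) *m AR = intmx R b.
  rewrite /b !intmxD intmxM intmxZ a0R -hv.2 /xs !mulmxDl -scalemxAl !scalerA.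
  by rewrite [RHS]addrC [X in _ = _ + X]addrC addrA.
have hb : Good b.
  split; last by exists z, s%:Z; rewrite /b addrK.
  exists (xs s + intmx R z); split => // r.
  rewrite !mxE intrN.
  have := floor_itv (xs s 0 r); rewrite intrD /xs !mxE => /andP [h1 h2].
  apply/andP; split; lra.
exists b; split => //.
have [h1 h2] := s0_spec _ _ hs hP.
exact: (s0_unique _ _ _ (leq_ltn_trans h1 hs) hs h2 hP).
Qed.

Lemma good_bi : Good bi.
Proof.
split; first by exists v.
by exists 0, 0; rewrite subrr mul0mx scale0r addr0.
Qed.

Lemma phi_bi : phi bi = 0%N.
Proof.
have hP : inZA A (bi - bi - 0%:Z *: a0) by exists 0; rewrite subrr scale0r subr0 mul0mx.
by have [h1 _] := s0_spec _ _ hl0 hP; apply/eqP; rewrite -leqn0.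
Qed.

Lemma interior_char b : Good b ->
  (interior_PA R A b <-> forall r, ~ inZ (xs (phi b) 0 r)).
Proof.
move=> hb; have [c [z [hc1 hc2 hx]]] := good_coords _ hb.
have ent : forall r, c 0 r = xs (phi b) 0 r + (z 0 r)%:~R.
  by move=> r; rewrite hx [in LHS]mxE [intmx _ _ _ _]mxE.
split.
- case=> c' [hc'1 hc'2] r [k hk].
  have ec : c' = c by apply: (row_free_inj hA); rewrite /= hc'2 hc2.
  have := hc'1 r; rewrite ec ent hk -intrD ltr0z ltrz1; lia.
- move=> H; exists c; split => // r.
  have /andP [h1 h2] := hc1 r; rewrite h2 andbT lt_neqAle h1 andbT.
  apply/eqP => e; apply: (H r); exists (- z 0 r).
  by rewrite intrN; apply/eqP; rewrite -subr_eq0 opprK -ent e.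
Qed.

Lemma boundary_char b : Good b -> (boundary_PA R A b <-> Bd (phi b)).
Proof.
move=> hb; rewrite /boundary_PA /Bd; split.
- case=> _ hni; apply/asboolP; apply: contrapT => H; apply: hni.
  by apply/(interior_char _ hb) => r hr; apply: H; exists r.
- move/asboolP => [r hr]; split; first exact: hb.1.
  by move/(interior_char _ hb) => H; exact: H r hr.
Qed.

Lemma num_char s : (s < l0)%N ->
  ((l0 - s)%:R / l0%:R \in num_params l v) <-> (s != 0%N /\ Bd s).
Proof.
move=> hs; have N0 : (0:R) < l0%:R by rewrite ltr0n.
have N0' : (l0%:R : R) != 0 by rewrite gt_eqF.
have hsub : ((l0 - s)%:R : R) = l0%:R - s%:R by rewrite natrB // ltnW.
split.
- case/flattenP => sq /mapP [r _ ->] /mapP [sg hsg e].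
  rewrite mem_iota add0n in hsg.
  have L0 : (0:R) < (l r)%:R by rewrite ltr0n hl.
  have L0' : ((l r)%:R : R) != 0 by rewrite gt_eqF.
  have hsgR : (sg%:R + 1 <= (l r)%:R :> R) by rewrite natr1 ler_nat.
  have ev : v 0 r + sg%:R = (l0%:R - s%:R) / l0%:R * (l r)%:R.
    by rewrite -hsub e; field.
  have /andP [hv1 hv2] := hv.1 r.
  split.
  + apply/eqP => s0'; move: ev; rewrite s0' subr0 divff // mul1r; lra.
  + apply/asboolP; exists r; exists (Posz (l r - sg)%N).
    change ((l r - sg)%:Z)%:~R with (((l r - sg)%N)%:R : R).
    rewrite /xs !mxE natrB; last by move: hsg; lia.
    have : (l0%:R - s%:R) / l0%:R * (l r)%:R = (l r)%:R - s%:R / l0%:R * (l r)%:R :> R.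
      by field.
    lra.
- move=> [sn0 /asboolP [r [k hk]]].
  rewrite /xs !mxE in hk.
  have L0 : (0:R) < (l r)%:R by rewrite ltr0n hl.
  have L0' : ((l r)%:R : R) != 0 by rewrite gt_eqF.
  have hpos : (0:R) < s%:R / l0%:R * (l r)%:R.
    by rewrite mulr_gt0 // divr_gt0 // ltr0n lt0n.
  have hs1 : (s%:R / l0%:R : R) < 1 by rewrite ltr_pdivrMr // mul1r ltr_nat.
  have hlt : s%:R / l0%:R * (l r)%:R < (l r)%:R :> R by nra.
  have /andP [hv1 hv2] := hv.1 r.
  have k0 : (0 < k) by rewrite -(ltr0z R) -hk; lra.
  have k1 : (k < (l r)%:Z + 1).
    rewrite -(ltr_int R) intrD -hk.
    change (((l r)%:Z)%:~R : R) with ((l r)%:R : R); lra.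
  case: k hk k0 k1 => // kn hk k0 k1.
  change ((kn%:Z)%:~R : R) with (kn%:R : R) in hk.
  apply/flattenP; exists [seq (v 0 r + sg%:R) / (l r)%:R | sg <- iota 0 (l r)].
    by apply/mapP; exists r => //; rewrite mem_enum.
  apply/mapP; exists (l r - kn)%N; first by rewrite mem_iota; lia.
  rewrite hsub natrB; last by lia.
  have -> : v 0 r = kn%:R - s%:R / l0%:R * (l r)%:R by lra.
  by field; rewrite L0' N0'.
Qed.

Lemma mem_common y :
  y \in common_params (num_params l v) (den_params R l0) <->
  exists s, [/\ (s < l0)%N, s != 0%N, Bd s & y = 1 - s%:R / l0%:R].
Proof.
have N0' : (l0%:R : R) != 0 by rewrite pnatr_eq0 -lt0n.
rewrite /common_params mem_filter /den_params; split.
- case/andP => hnum /mapP [t ht ey]; rewrite mem_iota in ht.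
  have hs : (l0 - t < l0)%N by lia.
  have e : t = (l0 - (l0 - t))%N by lia.
  move: hnum; rewrite ey {1}e => /(num_char _ hs) [h1 h2].
  exists (l0 - t)%N; split => //.
  rewrite natrB; last by lia.
  by field.
- case=> s [hs sn0 hb ->]; apply/andP; split.
  + have := (num_char _ hs).2 (conj sn0 hb).
    by rewrite natrB ?(ltnW hs) // mulrBl divff.
  + apply/mapP; exists (l0 - s)%N; first by rewrite mem_iota; lia.
    by rewrite natrB ?(ltnW hs) // mulrBl divff.
Qed.

Lemma count_common :
  size (common_params (num_params l v) (den_params R l0)) =
  count (fun s => (s != 0%N) && Bd s) (iota 0 l0).
Proof.
rewrite /common_params size_filter /den_params count_map.
have hp : perm_eq (iota 1 l0) [seq (l0 - s)%N | s <- iota 0 l0].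
  apply: uniq_perm; first exact: iota_uniq.
    rewrite map_inj_in_uniq ?iota_uniq // => x y; rewrite !mem_iota; lia.
  move=> t; rewrite mem_iota; apply/idP/mapP.
    by move=> ht; exists (l0 - t)%N; [rewrite mem_iota|]; lia.
  by case=> s; rewrite mem_iota => hs ->; lia.
rewrite (permP hp) count_map; apply: eq_in_count => s; rewrite mem_iota => hs.
apply/idP/idP.
  by move/(num_char _ (_ : (s < l0)%N)) => -[|-> ->] //; lia.
by case/andP => h1 h2; apply/(num_char _ (_ : (s < l0)%N)) => //; lia.
Qed.

Variables (Bk : seq 'rV[int]_n).
Hypothesis hBk : uniq Bk.
Hypothesis hBkP : forall b, b \in Bk <-> (in_PA R A b /\ inZAplus A a0 (b - bi)).

Lemma perm_phi : perm_eq [seq phi b | b <- Bk] (iota 0 l0).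
Proof.
apply: uniq_perm; last 1 first.
- move=> s; rewrite mem_iota add0n; apply/mapP/idP.
    by case=> b /hBkP hg ->; have [] := good_phi _ hg.
  move=> hs; have [b [hg e]] := s0_surj _ hs.
  by exists b => //; apply/hBkP.
- rewrite map_inj_in_uniq // => b1 b2 /hBkP h1 /hBkP h2; exact: s0_inj.
- exact: iota_uniq.
Qed.

Lemma Rk_count : count (fun b => `[< interior_PA R A b >]) Bk =
  count (fun s => ~~ Bd s) (iota 0 l0).
Proof.
rewrite -(permP perm_phi) count_map; apply: eq_in_count => b /hBkP hg /=.
apply/idP/idP.
  move/asboolP/(interior_char _ hg) => H; apply/asboolPn => -[r hr]; exact: H r hr.
move/asboolPn => H; apply/asboolP/(interior_char _ hg) => r hr; apply: H; by exists r.
Qed.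

Lemma mem_bnd (p : pred 'rV[int]_n) (Q : pred nat) y :
  {in Bk, forall b, p b = Q (phi b)} ->
  y \in [seq (1 - (phi b)%:R / l0%:R : R) | b <- [seq b <- Bk | `[< boundary_PA R A b >]] & p b] <->
  exists s, [/\ (s < l0)%N, Q s, Bd s & y = 1 - s%:R / l0%:R].
Proof.
move=> hpQ; split.
- case/mapP => b; rewrite !mem_filter => /andP [hp /andP [hbd hb]] ->.
  have hg := (hBkP b).1 hb.
  exists (phi b); split => //; first by have [] := good_phi _ hg.
    by rewrite -hpQ.
  by apply/(boundary_char _ hg); apply/asboolP.
- case=> s [hs hq hbd ->]; have [b [hg e]] := s0_surj _ hs.
  have hb : b \in Bk by apply/hBkP.
  apply/mapP; exists b; last by rewrite e.
  rewrite !mem_filter hb andbT hpQ // e hq /=.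
  by apply/asboolP/(boundary_char _ hg); rewrite e.
Qed.

Lemma main_lemma :
  let Rk := count (fun b => `[< interior_PA R A b >]) Bk in
  let common := common_params (num_params l v) (den_params R l0) in
  let bnd := [seq b <- Bk | `[< boundary_PA R A b >]] in
  ((forall r, 0 < v 0 r) ->
     size common = (l0 - Rk)%N /\
     common =i [seq 1 - (s0 A a0 l0 bi b)%:R / l0%:R | b <- bnd]) /\
  (~ (forall r, 0 < v 0 r) ->
     size common = (l0 - Rk - 1)%N /\
     common =i [seq 1 - (s0 A a0 l0 bi b)%:R / l0%:R | b <- bnd & b != bi]).
Proof.
move=> Rk common bnd; rewrite /Rk /common /bnd {Rk common bnd}.
rewrite Rk_count count_common.
have hC : count (fun s => ~~ Bd s) (iota 0 l0) = count (predC Bd) (iota 0 l0).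
  exact: eq_count.
have hT := count_predC Bd (iota 0 l0); rewrite size_iota in hT.
split => hv0.
- have hB0 : ~~ Bd 0.
    apply/asboolPn => -[r [k hk]]; move: hk; rewrite /xs !mxE mul0r mul0r addr0 => hk.
    have := hv0 r; have /andP [_ h2] := hv.1 r; rewrite hk ltr0z; move: h2; rewrite hk ltrz1; lia.
  have e : count (fun s => (s != 0%N) && Bd s) (iota 0 l0) = count Bd (iota 0 l0).
    apply: eq_in_count => s _; case: (s =P 0%N) => [->|] //=; by rewrite (negbTE hB0).
  split; first by rewrite e; lia.
  move=> y; apply/idP/idP.
    case/mem_common => s [hs hs0 hb ->].
    rewrite -(filter_predT [seq b <- Bk | `[< boundary_PA R A b >]]).
    by apply/(mem_bnd predT predT) => //; exists s.
  rewrite -(filter_predT [seq b <- Bk | `[< boundary_PA R A b >]]).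
  case/(mem_bnd predT predT) => // s [hs _ hb ->].
  apply/mem_common; exists s; split => //.
  by apply: contraNneq hB0 => e0; rewrite -e0.
- have hB0 : Bd 0.
    apply/asboolP; move/existsNP: hv0 => [r hr]; exists r; exists 0.
    have /andP [h1 _] := hv.1 r.
    rewrite /xs !mxE mul0r mul0r addr0; apply/eqP; rewrite eq_le h1 andbT.
    by rewrite leNgt; apply/negP.
  have hpQ : {in Bk, forall b, (b != bi) = (phi b != 0%N)}.
    move=> b /hBkP hg; congr negb; apply/eqP/eqP => [->|e]; first exact: phi_bi.
    by apply: s0_inj => //; [exact: good_bi | rewrite e phi_bi].
  split.
    have hl0' : l0 = l0.-1.+1 by rewrite prednK.
    move: hT hC; rewrite hl0' /= hB0 /= => hT hC.
    have e : count (fun s => (s != 0%N) && Bd s) (iota 1 l0.-1) = count Bd (iota 1 l0.-1).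
      by apply: eq_in_count => s; rewrite mem_iota => hs; have -> : s != 0%N by lia.
    rewrite e; move: hT; rewrite hC. lia.
  move=> y; apply/idP/idP.
    case/mem_common => s [hs hs0 hb ->].
    by apply/(mem_bnd _ (fun s => s != 0%N)) => //; exists s.
  case/(mem_bnd _ (fun s => s != 0%N)) => // s [hs hs0 hb ->].
  by apply/mem_common; exists s.
Qed.

End Main.

Theorem proposition6p14 (R : realType) (n m : nat) (A : 'M[int]_(m, n))
  (a0 : 'rV[int]_n) (l : 'I_m -> nat) (l0 : nat)
  (hA : row_free (intmx R A))
  (hl : forall j, (0 < l j)%N) (hl0 : (0 < l0)%N)
  (hgcd : gcdn l0 (\big[gcdn/0%N]_(j < m) l j) = 1%N)
  (hrel : (l0%:Z) *: a0 = \sum_(j < m) ((l j)%:Z) *: row j A)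
  (hsum : l0 = (\sum_(j < m) l j)%N)
  (bi : 'rV[int]_n) (v : 'rV[R]_m)
  (hv : (forall r, 0 <= v 0 r < 1) /\ v *m intmx R A = intmx R bi)
  (Bk : seq 'rV[int]_n) (hBk : uniq Bk)
  (hBkP : forall b, b \in Bk <-> (in_PA R A b /\ inZAplus A a0 (b - bi))) :
  let Rk := count (fun b => `[< interior_PA R A b >]) Bk in
  let common := common_params (num_params l v) (den_params R l0) in
  let bnd := [seq b <- Bk | `[< boundary_PA R A b >]] in
  ((forall r, 0 < v 0 r) ->
     size common = (l0 - Rk)%N /\
     common =i [seq 1 - (s0 A a0 l0 bi b)%:R / l0%:R | b <- bnd]) /\
  (~ (forall r, 0 < v 0 r) ->
     size common = (l0 - Rk - 1)%N /\
     common =i [seq 1 - (s0 A a0 l0 bi b)%:R / l0%:R | b <- bnd & b != bi]).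
Proof.
exact: (@main_lemma R n m A a0 l l0 hA hl hl0 hgcd hrel bi v hv Bk hBk hBkP).
Qed.
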